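(* Let $G$ be a finite group with pairwise non-isomorphic irreducible complex representations $V_1,\dots,V_k$ with characters $\chi_1,\dots,\chi_k$. Suppose $Q_1,\dots,Q_m$ are probability distributions on $G$ that are constant on conjugacy classes, and let $Q_i=\sum_{j=1}^k a_j^{i}\chi_j$ be their unique expressions as linear combinations of irreducible characters. For a word $w=w_1w_2\cdots w_N$ with $w_i\in\{1,\dots,m\}$ let $Q^{(w)}:=Q_{w_1}\ast\cdots\ast Q_{w_N}$ and $q^{w}:=\sum_{g\in G}Q^{(w)}(g)e_g\in\mathbb{C}G$. Then for every $G$-homogeneous space $X$ and every $x_0\in X$, \[\|q^{w}\cdot e_{x_0}-\overline{u}_X\|^2_{\rm TV}\leq \frac{1}{4}\sum_{V_j\neq {\rm triv}}m(V_j,\mathbb{C} X)\dim(V_j)\left(\frac{|G|}{\dim(V_j)}\right)^{2N}\left(\prod_{i=1}^N a_j^{w_i}\right)^2.\]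
   Context: Convolution: $(P\ast R)(h)=\sum_{g}P(hg^{-1})R(g)$. $\mathbb{C}G$ is the group algebra with basis $\{e_g\}$. A $G$-homogeneous space is a finite set $X$ with transitive $G$-action; $\mathbb{C}X$ has basis $\{e_x\}$ and is a $\mathbb{C}G$-module via $e_g\cdot e_x:=e_{g(x)}$. $\|h\|_{\rm TV}:=\frac12\sum_x|h(x)|$ for $h=\sum_xh(x)e_x$; $\overline{u}_X:=\frac1{|X|}\sum_xe_x$. $m(V_j,\mathbb{C}X)$ is the multiplicity of $V_j$ in $\mathbb{C}X$; the sum runs over nontrivial irreducibles. *)

(* Defs.v *)
From HB Require Import structures.
From mathcomp Require Import all_boot all_order all_algebra all_fingroup all_solvable all_field all_character.
Set Implicit Arguments. Unset Strict Implicit. Unset Printing Implicit Defensive.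
Import Order.TTheory GRing.Theory Num.Theory.
Local Open Scope ring_scope.

Section Defs.
Variables (gT : finGroupType) (G : {group gT}).

Definition convG (P R : gT -> algC) : gT -> algC :=
  fun h => \sum_(g in G) P (h * g^-1)%g * R g.

Definition delta1 : gT -> algC := fun g => (g == 1%g)%:R.

Definition convWord (m : nat) (Q : 'I_m -> 'CF(G)) (w : seq 'I_m) : gT -> algC :=
  foldr (fun i acc => convG (fun g => Q i g) acc) delta1 w.

Variables (T : finType) (to : action G T).

(* The left action g(x) := to x g^-1 associated with the (right) mathcomp action. *)
Definition lact (g : gT) (x : T) : T := to x g^-1%g.

(* Coefficient of e_x in q . e_{x0} = sum_g P(g) e_{g(x0)}. *)
Definition actOn (P : gT -> algC) (x0 : T) : T -> algC :=
  fun x => \sum_(g in G | lact g x0 == x) P g.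

Definition tv_unif (h : T -> algC) : algC :=
  2^-1 * \sum_(x : T) `|h x - (#|T|%:R)^-1|.

Definition perm_mx_of (g : gT) : 'M[algC]_#|T| :=
  \matrix_(i, j) ((to (enum_val i) g == enum_val j)%:R).

Lemma perm_mx_of_repr : mx_repr G perm_mx_of.
Proof.
split.
  apply/matrixP=> i j; rewrite !mxE act1.
  by rewrite (inj_eq enum_val_inj).
move=> g h Gg Gh; apply/matrixP=> i j; rewrite !mxE.
rewrite (bigD1 (enum_rank (to (enum_val i) g))) //= !mxE enum_rankK eqxx mul1r.
rewrite big1 ?addr0; first by rewrite actMin.
by move=> k /negbTE nk; rewrite !mxE -(inj_eq enum_rank_inj) enum_valK eq_sym nk mul0r.
Qed.

Definition perm_repr := MxRepresentation perm_mx_of_repr.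

Definition perm_mult (j : Iirr G) : algC := '[cfRepr perm_repr, 'chi_j].

End Defs.

(* Main.v *)
Require Import Defs.
From HB Require Import structures.
From mathcomp Require Import all_boot all_order all_algebra all_fingroup all_solvable all_field all_character.
From mathcomp Require Import ring.
Import Order.TTheory GRing.Theory Num.Theory.
Local Open Scope ring_scope.

Section Aux.
Variables (gT : finGroupType) (G : {group gT}).

Lemma cfunMC (phi : 'CF(G)) x y : x \in G -> phi (x * y)%g = phi (y * x)%g.
Proof. by move=> Gx; rewrite -(cfunJ phi (x*y)%g Gx) conjgE mulgA mulKg. Qed.

Lemma sumG_inv (F : gT -> algC) : \sum_(g in G) F g = \sum_(g in G) F g^-1%g.
Proof.
rewrite (reindex_inj invg_inj) /=; apply: eq_bigl => g; by rewrite groupV.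
Qed.

Lemma conv_irr i j h : h \in G ->
  convG G (fun g => 'chi[G]_i g) (fun g => 'chi_j g) h
  = (i == j)%:R * (#|G|%:R / 'chi_i 1%g) * 'chi_i h.
Proof.
move=> Gh; rewrite /convG sumG_inv.
have := generalized_orthogonality_relation h i j.
move/(congr1 (fun z => #|G|%:R * z)); rewrite mulrA mulfV ?pnatr_eq0 -?lt0n ?cardG_gt0 // mul1r.
move=> E; rewrite (eq_bigr (fun x => 'chi_i (x * h)%g * 'chi_j x^-1%g)); last first.
  by move=> g Gg; rewrite invgK cfunMC.
rewrite E; ring.
Qed.

Lemma conv_lin (c b : Iirr G -> algC) (R : gT -> algC) h : h \in G ->
  (forall g, g \in G -> R g = \sum_l b l * 'chi[G]_l g) ->
  convG G (fun g => (\sum_k c k *: 'chi[G]_k) g) R h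
  = \sum_k (c k * b k * (#|G|%:R / 'chi_k 1%g)) * 'chi_k h.
Proof.
move=> Gh HR.
transitivity (\sum_k \sum_l c k * b l * convG G (fun g => 'chi[G]_k g) (fun g => 'chi[G]_l g) h).
  rewrite /convG (eq_bigr (fun g => \sum_k \sum_l c k * b l * ('chi[G]_k (h * g^-1)%g * 'chi_l g))).
    rewrite exchange_big /=; apply: eq_bigr => k _.
    rewrite exchange_big /=; apply: eq_bigr => l _.
    by rewrite mulr_sumr.
  move=> g Gg; rewrite HR // sum_cfunE mulr_suml; apply: eq_bigr => k _.
  rewrite mulr_sumr; apply: eq_bigr => l _; rewrite cfunE; ring.
apply: eq_bigr => k _; rewrite (bigD1 k) //= big1 ?addr0.
  by rewrite conv_irr // eqxx mul1r !mulrA.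
by move=> l nlk; rewrite conv_irr // eq_sym (negbTE nlk) !mul0r mulr0.
Qed.

Lemma delta1_eq g : g \in G ->
  delta1 g = \sum_j ('chi[G]_j 1%g / #|G|%:R) * 'chi_j g.
Proof.
move=> Gg.
have nG : #|G|%:R != 0 :> algC by rewrite pnatr_eq0 -lt0n cardG_gt0.
have := congr1 (fun f : 'CF(G) => f g) (cfReg_sum G).
rewrite cfRegE sum_cfunE /delta1 => E.
apply: (mulfI nG); rewrite mulr_sumr mulr_natr E; apply: eq_bigr => j _.
rewrite cfunE; field; done.
Qed.

Definition pw {m : nat} (a : 'I_m -> Iirr G -> algC) (w : seq 'I_m) (j : Iirr G) : algC :=
  foldr (fun i acc => a i j * (#|G|%:R / 'chi[G]_j 1%g) * acc) ('chi_j 1%g / #|G|%:R) w.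

Lemma convWord_eq m (Q : 'I_m -> 'CF(G)) (a : 'I_m -> Iirr G -> algC)
    (Ha : forall i, Q i = \sum_(j : Iirr G) a i j *: 'chi_j) w g :
  g \in G -> convWord Q w g = \sum_j pw a w j * 'chi_j g.
Proof.
elim: w g => [|i w IH] g Gg /=; first exact: delta1_eq.
rewrite Ha (@conv_lin _ (pw a w)) //; apply: eq_bigr => k _; ring.
Qed.

Lemma orth_irr j l k : k \in G ->
  \sum_(g in G) 'chi[G]_j g * ('chi[G]_l (g * k)%g)^*
  = (j == l)%:R * #|G|%:R * ('chi_j k)^* / 'chi_j 1%g.
Proof.
move=> Gk.
have nG : #|G|%:R != 0 :> algC by rewrite pnatr_eq0 -lt0n cardG_gt0.
have := generalized_orthogonality_relation k^-1 l j.
move/(congr1 (fun z => #|G|%:R * z)); rewrite mulrA mulfV // mul1r => E.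
rewrite sumG_inv (eq_bigr (fun x => 'chi_l (x * k^-1)%g * 'chi_j x^-1%g)); last first.
  move=> g Gg; rewrite -irr_inv invMg invgK (cfunMC _ _ _ (groupVr Gk)) mulrC.
  done.
rewrite E irr_inv eq_sym; case: (j =P l) => [->|_]; last by rewrite !mul0r mulr0.
rewrite !mul1r; field; exact: irr1_neq0.
Qed.

Section Act.
Variables (T : finType) (to : action G T) (x0 : T).

Lemma lact_eq g h : g \in G -> h \in G ->
  (lact to h x0 == lact to g x0) = (to x0 (g^-1 * h)%g == x0).
Proof.
move=> Gg Gh; rewrite /lact -(inj_eq (@act_inj _ _ _ to h)) actKVin //.
by rewrite -actMin ?groupV // eq_sym.
Qed.

Lemma step1 (P : gT -> algC) :
  \sum_x actOn to P x0 x * (actOn to P x0 x)^*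
  = \sum_(g in G) \sum_(h in G) (to x0 (g^-1 * h)%g == x0)%:R * (P g * (P h)^*).
Proof.
rewrite [RHS](partition_big (fun g => lact to g x0) predT) //=.
apply: eq_bigr => x _; rewrite /actOn mulr_suml; apply: eq_bigr => g /andP[Gg /eqP <-].
rewrite rmorph_sum mulr_sumr big_mkcondr /=; apply: eq_bigr => h Gh.
rewrite lact_eq //; case: ifP => _; by rewrite ?mul1r ?mul0r.
Qed.

Lemma inner (P : gT -> algC) (p : Iirr G -> algC)
  (HP : forall g, g \in G -> P g = \sum_j p j * 'chi[G]_j g) k : k \in G ->
  \sum_(g in G) P g * (P (g * k)%g)^*
  = \sum_j p j * (p j)^* * (#|G|%:R / 'chi_j 1%g) * ('chi_j k)^*.
Proof.
move=> Gk.
transitivity (\sum_j \sum_l p j * (p l)^* * \sum_(g in G) 'chi[G]_j g * ('chi[G]_l (g * k)%g)^*).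
  rewrite (eq_bigr (fun g => \sum_j \sum_l p j * (p l)^* * ('chi[G]_j g * ('chi[G]_l (g * k)%g)^*))).
    rewrite exchange_big /=; apply: eq_bigr => j _.
    rewrite exchange_big /=; apply: eq_bigr => l _.
    by rewrite mulr_sumr.
  move=> g Gg; rewrite HP // HP ?groupM // rmorph_sum mulr_suml; apply: eq_bigr => j _.
  rewrite mulr_sumr; apply: eq_bigr => l _; rewrite rmorphM /=; ring.
apply: eq_bigr => j _; rewrite (bigD1 j) //= orth_irr // eqxx mul1r.
rewrite [X in _ + X]big1 ?addr0.
  field; exact: irr1_neq0.
by move=> l nlj; rewrite orth_irr // eq_sym (negbTE nlj) !mul0r mulr0.
Qed.

Lemma sumD (P : gT -> algC) (p : Iirr G -> algC)
  (HP : forall g, g \in G -> P g = \sum_j p j * 'chi[G]_j g) :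
  \sum_x actOn to P x0 x * (actOn to P x0 x)^*
  = \sum_j p j * (p j)^* * (#|G|%:R / 'chi_j 1%g)
       * \sum_(k in G) (to x0 k == x0)%:R * ('chi[G]_j k)^*.
Proof.
rewrite step1 (eq_bigr (fun g => \sum_(k in G) (to x0 k == x0)%:R * (P g * (P (g*k)%g)^*))).
  rewrite exchange_big /=.
  rewrite (eq_bigr (fun k => \sum_j (to x0 k == x0)%:R * (p j * (p j)^* * (#|G|%:R / 'chi_j 1%g) * ('chi[G]_j k)^*))).
    rewrite exchange_big /=; apply: eq_bigr => j _; rewrite mulr_sumr; apply: eq_bigr => k _; ring.
  by move=> k Gk; rewrite -[LHS]mulr_sumr (inner _ _ HP _ Gk) mulr_sumr.
move=> g Gg; rewrite (reindex_inj (mulgI g)) /=; apply: eq_big => k.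
  by rewrite groupMl.
by move=> _; rewrite mulKg.
Qed.

Definition Sj (j : Iirr G) := \sum_(k in G) (to x0 k == x0)%:R * ('chi[G]_j k)^*.

Lemma Sj_x (Htr : [transitive G, on [set: T] | to]) j x :
  \sum_(g in G) (to x g == x)%:R * ('chi[G]_j g)^* = Sj j.
Proof.
have [t Gt ->] := atransP2in (subxx G) Htr (in_setT x0) (in_setT x).
rewrite /Sj (reindex_inj (conjg_inj t)) /=; apply: eq_big => k.
  by rewrite groupJr.
move=> Gkt; have Gk : k \in G by rewrite -(groupJr k Gt). rewrite cfunJ // -actMin ?groupJ //.
by rewrite conjgE mulgA mulgV mul1g actMin // (inj_eq (act_inj to t)).
Qed.

Lemma perm_mult_eq (Htr : [transitive G, on [set: T] | to]) j :
  perm_mult to j = #|G|%:R^-1 * (#|T|%:R * Sj j).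
Proof.
rewrite /perm_mult cfdotE; congr (_ * _).
rewrite (eq_bigr (fun g => \sum_x (to x g == x)%:R * ('chi[G]_j g)^*)).
  rewrite exchange_big /= (eq_bigr (fun x => Sj j)); last by move=> x _; exact: Sj_x.
  by rewrite sumr_const mulr_natl; congr (_ *+ _); apply: eq_card.
move=> g Gg; rewrite cfunE Gg mulr1n /mxtrace -mulr_suml.
congr (_ * _); rewrite [RHS](reindex _ (onW_bij _ (@enum_val_bij T))) /=; apply: eq_bigr => i _.
by rewrite /perm_repr /= mxE.
Qed.

Lemma S0_eq (Htr : [transitive G, on [set: T] | to]) :
  #|T|%:R * Sj 0 = #|G|%:R.
Proof.
have -> : Sj 0 = #|('C_G[x0 | to])%g|%:R.
  rewrite /Sj irr0 (eq_bigr (fun k => if to x0 k == x0 then 1 else 0)); last first.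
    by move=> k Gk; rewrite cfun1E Gk conjC1 mulr1; case: eqP.
  rewrite -big_mkcondr /= -sum1_card natr_sum; apply: eq_bigl => k.
  by rewrite !inE sub1set inE andbA andbb.
rewrite -(card_orbit_in_stab to x0 (subxx G)) natrM (atransPin (subxx G) Htr (in_setT x0)).
by rewrite cardsT.
Qed.

Lemma sum_mu (P : gT -> algC) :
  \sum_x actOn to P x0 x = \sum_(g in G) P g.
Proof.
by rewrite [RHS](partition_big (fun g => lact to g x0) predT).
Qed.
End Act.

Lemma sum_irr j : \sum_(g in G) 'chi[G]_j g = #|G|%:R * (j == 0)%:R.
Proof.
have nG : #|G|%:R != 0 :> algC by rewrite pnatr_eq0 -lt0n cardG_gt0.
have := cfdot_irr j 0; rewrite cfdotE irr0 => E.
rewrite -E mulrA mulfV // mul1r; apply: eq_bigr => g Gg.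
by rewrite cfun1E Gg conjC1 mulr1.
Qed.

Lemma pw_closed m (a : 'I_m -> Iirr G -> algC) w j :
  pw a w j = (#|G|%:R / 'chi[G]_j 1%g) ^+ size w * \prod_(i <- w) a i j
             * ('chi_j 1%g / #|G|%:R).
Proof.
elim: w => [|i w IH] /=; first by rewrite big_nil expr0 !mul1r.
by rewrite IH big_cons exprS; ring.
Qed.
End Aux.
Arguments pw {gT G m}.

Lemma cs (I : finType) (r : I -> algC) : (forall x, 0 <= r x) ->
  (\sum_x r x) ^+ 2 <= #|I|%:R * \sum_x r x ^+ 2.
Proof.
move=> Hr.
have n2 : (2%:R : algC) != 0 by rewrite pnatr_eq0.
have -> : (\sum_x r x) ^+ 2 = \sum_x \sum_y r x * r y.
  by rewrite expr2 mulr_suml; apply: eq_bigr => x _; rewrite mulr_sumr.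
have cI : #|[pred x : I | true]| = #|I| by apply: eq_card.
have E1 : \sum_(x : I) \sum_(y : I) r x ^+ 2 = (\sum_x r x ^+ 2) *+ #|I|.
  rewrite -sumrMnl; apply: eq_bigr => x _; by rewrite sumr_const cI.
have E2 : \sum_(x : I) \sum_(y : I) r y ^+ 2 = (\sum_x r x ^+ 2) *+ #|I|.
  by rewrite sumr_const cI.
have -> : #|I|%:R * \sum_x r x ^+ 2 = \sum_x \sum_y 2%:R^-1 * (r x ^+ 2 + r y ^+ 2).
  rewrite [RHS](eq_bigr (fun x => 2%:R^-1 * (\sum_(y : I) r x ^+ 2 + \sum_(y : I) r y ^+ 2))); last first.
    by move=> x _; rewrite -mulr_sumr big_split.
  rewrite -mulr_sumr big_split /= E1 E2 mulr_natl -mulr2n -[X in _ = _ * X]mulr_natl mulrA mulVf ?mul1r //.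
apply: ler_sum => x _; apply: ler_sum => y _.
rewrite -subr_ge0.
have -> : 2%:R^-1 * (r x ^+ 2 + r y ^+ 2) - r x * r y = 2%:R^-1 * (r x - r y) ^+ 2.
  by field.
apply: mulr_ge0; first by rewrite invr_ge0 ler0n.
apply: real_exprn_even_ge0 => //.
by apply: realB; apply: ger0_real.
Qed.

Theorem corollary1p5 (gT : finGroupType) (G : {group gT}) (m : nat)
    (Q : 'I_m -> 'CF(G)) (a : 'I_m -> Iirr G -> algC)
    (HQpos : forall i g, g \in G -> 0 <= Q i g)
    (HQsum : forall i, \sum_(g in G) Q i g = 1)
    (Ha : forall i, Q i = \sum_(j : Iirr G) a i j *: 'chi_j)
    (w : seq 'I_m)
    (T : finType) (to : action G T)
    (Htr : [transitive G, on [set: T] | to]) (x0 : T) :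
  tv_unif (actOn to (convWord Q w) x0) ^+ 2
  <= 4^-1 * \sum_(j : Iirr G | j != 0)
        perm_mult to j * 'chi_j 1%g
        * ((#|G|%:R / 'chi_j 1%g) ^+ (2 * size w))
        * `|\prod_(i <- w) a i j| ^+ 2.
Proof.
have nG : #|G|%:R != 0 :> algC by rewrite pnatr_eq0 -lt0n cardG_gt0.
have nT : #|T|%:R != 0 :> algC.
  by rewrite pnatr_eq0 -lt0n; apply/card_gt0P; exists x0.
have HP := @convWord_eq gT G m Q a Ha w.
set P := convWord Q w in HP *.
set mu := actOn to P x0.
have chi01 : 'chi[G]_0 1%g = 1 by rewrite irr0 cfun1E group1.
have Ha0 : forall i, a i 0 = #|G|%:R^-1.
  move=> i; have := congr1 (fun f => '[f, 'chi[G]_0]) (Ha i) => /=.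
  rewrite cfdot_suml (bigD1 0) //= big1 ?addr0; last first.
    by move=> k nk; rewrite cfdotZl cfdot_irr (negbTE nk) mulr0.
  rewrite cfdotZl cfdot_irr eqxx mulr1 => <-.
  rewrite cfdotE (eq_bigr (fun g => Q i g)) ?HQsum ?mulr1 //.
  by move=> g Gg; rewrite irr0 cfun1E Gg conjC1 mulr1.
have p0 : forall w', pw a w' 0 = #|G|%:R^-1.
  elim=> [|i w' IH] /=; first by rewrite chi01 mul1r.
  by rewrite IH Ha0 chi01 divr1 mulVf // mul1r.
have sum_mu1 : \sum_x mu x = 1.
  rewrite /mu sum_mu (eq_bigr _ HP) exchange_big /=.
  rewrite (eq_bigr (fun j => pw a w j * (#|G|%:R * (j == 0)%:R))); last first.
    by move=> j _; rewrite -sum_irr mulr_sumr.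
  rewrite (bigD1 0) //= big1 ?addr0; last first.
    by move=> j nj; rewrite (negbTE nj) mulr0 mulr0.
  by rewrite p0 mulr1 mulVf.
have u_conj : (#|T|%:R^-1 : algC)^* = #|T|%:R^-1 by apply: conj_Creal; rewrite realV realn.
have Gc : (#|G|%:R : algC)^* = #|G|%:R by rewrite conjC_nat.
have dc : forall j, ('chi[G]_j 1%g)^* = 'chi_j 1%g by move=> j; apply: conj_natr; exact: Cnat_irr1.
have D1 : #|T|%:R * \sum_x mu x * (mu x)^*
    = \sum_j pw a w j * (pw a w j)^* * (#|G|%:R / 'chi[G]_j 1%g) * (#|G|%:R * perm_mult to j).
  rewrite (@sumD _ _ _ to x0 _ _ HP) mulr_sumr; apply: eq_bigr => j _.
  rewrite (@perm_mult_eq _ _ _ to x0 Htr j) /Sj; field; by rewrite nG irr1_neq0.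
have Key : #|T|%:R * \sum_x `|mu x - #|T|%:R^-1| ^+ 2
   = \sum_(j : Iirr G | j != 0)
        perm_mult to j * 'chi_j 1%g
        * ((#|G|%:R / 'chi_j 1%g) ^+ (2 * size w))
        * `|\prod_(i <- w) a i j| ^+ 2.
  have cI : #|[pred x : T | true]| = #|T| by apply: eq_card.
  have L1 : \sum_x `|mu x - #|T|%:R^-1| ^+ 2 = \sum_x mu x * (mu x)^* - #|T|%:R^-1.
    rewrite (eq_bigr (fun x => mu x * (mu x)^* - #|T|%:R^-1 * (mu x)^* - #|T|%:R^-1 * mu x + #|T|%:R^-1 * #|T|%:R^-1)); last first.
      by move=> x _; rewrite normCK rmorphB /= u_conj; ring.
    rewrite big_split /= !sumrB -!mulr_sumr -rmorph_sum sum_mu1 rmorph1 sumr_const cI.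
    have un : #|T|%:R^-1 *+ #|T| = 1 :> algC by rewrite -[LHS]mulr_natr mulVf.
    rewrite un; ring.
    have Gic : (#|G|%:R^-1 : algC)^* = #|G|%:R^-1 by apply: conj_Creal; rewrite realV realn.
  have T0 : pw a w 0 * (pw a w 0)^* * (#|G|%:R / 'chi[G]_0 1%g) * (#|G|%:R * perm_mult to 0) = 1.
    rewrite (@perm_mult_eq _ _ _ to x0 Htr 0) (@S0_eq _ _ _ to x0 Htr) p0 chi01 Gic.
    by field.
  rewrite L1 mulrBr D1 mulfV // (bigD1 0) //= T0 addrC addrK.
  apply: eq_bigr => j nj.
  have d0 := irr1_neq0 j.
  have cr : (#|G|%:R / 'chi[G]_j 1%g)^* = #|G|%:R / 'chi_j 1%g.
    by apply: conj_Creal; apply: ger0_real; rewrite divr_ge0 ?ler0n // ltW // irr1_gt0.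
  have dr : ('chi[G]_j 1%g / #|G|%:R)^* = 'chi_j 1%g / #|G|%:R.
    by apply: conj_Creal; apply: ger0_real; rewrite divr_ge0 ?ler0n // ltW // irr1_gt0.
  have Gic2 : (#|G|%:R^-1 : algC)^* = #|G|%:R^-1 by apply: conj_Creal; rewrite realV realn.
  rewrite (@pw_closed gT G m a w j) !rmorphM /= rmorphXn /= cr dc Gic2 normCK mulnC exprM.
  field.
  by rewrite nG d0.
rewrite -Key /tv_unif exprMn.
have h4 : (2^-1 : algC) ^+ 2 = 4^-1 by rewrite exprVn -natrX.
rewrite h4; apply: ler_wpM2l; first by rewrite invr_ge0 ler0n.
by apply: cs => x; exact: normr_ge0.
Qed.
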